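(* Let $t>0$ and let $X\subseteq Z$ be finite subsets of $\mathbb{R}^D$. Then $\mathrm{Mag}(tZ)=\mathrm{Mag}(tX)$ if and only if $X$ and $Z$ are magnitude-equivalent at scale $t$.
   Context: For a finite set $A\subset\mathbb{R}^D$ and $t>0$, the matrix $\zeta_{tA}(x,y)=\exp(-t\|x-y\|)$ ($x,y\in A$) is invertible; $\mathbf{w}^t_A=\zeta_{tA}^{-1}\mathbb{1}$ is the weighting vector of $A$ at scale $t$ and $\mathrm{Mag}(tA)=\sum_{x\in A}\mathbf{w}^t_A(x)$. Finite $X,Y\subset\mathbb{R}^D$ are magnitude-equivalent at scale $t$ if $\{x\in X:\mathbf{w}^t_X(x)\neq0\}=\{y\in Y:\mathbf{w}^t_Y(y)\neq0\}$. *)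

(* Defs.v *)
From HB Require Import structures.
From mathcomp Require Import all_boot all_order all_algebra.
From mathcomp Require Import finmap.
From mathcomp Require Import all_classical all_reals all_analysis.
Set Implicit Arguments. Unset Strict Implicit. Unset Printing Implicit Defensive.
Import Order.TTheory GRing.Theory Num.Theory.
Local Open Scope ring_scope.
Local Open Scope fset_scope.

Section Magnitude.
Variables (R : realType) (D : nat).

Definition pt := 'rV[R]_D.

Definition enorm (x : pt) : R := Num.sqrt (\sum_(i < D) (x 0 i) ^+ 2).
Definition edist (x y : pt) : R := enorm (x - y).

Definition zeta (t : R) (A : {fset pt}) : 'M[R]_(#|{: A}|) :=
  \matrix_(i, j) expR (- (t * edist (val (enum_val i)) (val (enum_val j)))).

Definition weighting (t : R) (A : {fset pt}) : 'cV[R]_(#|{: A}|) :=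
  invmx (zeta t A) *m const_mx 1.

(* w^t_A(x) for x in A (and 0 outside A, never used there). *)
Definition weight (t : R) (A : {fset pt}) (x : pt) : R :=
  match insub x : option A with
  | Some a => weighting t A (enum_rank a) 0
  | None => 0
  end.

Definition Mag (t : R) (A : {fset pt}) : R :=
  \sum_(i < #|{: A}|) weighting t A i 0.

Definition wsupport (t : R) (A : {fset pt}) : {fset pt} :=
  [fset x in A | weight t A x != 0].

Definition mag_equiv (t : R) (X Y : {fset pt}) : Prop :=
  wsupport t X = wsupport t Y.

End Magnitude.

(* Main.v *)
Require Import Defs.
From HB Require Import structures.
From mathcomp Require Import all_boot all_order all_algebra.
From mathcomp Require Import finmap.
From mathcomp Require Import all_classical all_reals all_analysis.
From mathcomp.algebra_tactics Require Import ring lra.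
Import Order.TTheory GRing.Theory Num.Theory.
Import numFieldNormedType.Exports.
Local Open Scope ring_scope.

Local Open Scope classical_set_scope.
Section Kern.
Variables (R : realType) (I : finType).
Implicit Types (k l : I -> I -> R) (c d : I -> R).

Definition qf k c := \sum_i \sum_j c i * c j * k i j.
Definition bf k c d := \sum_i \sum_j c i * d j * k i j.
Definition psd k := forall c, 0 <= qf k c.
Definition symk k := forall i j, k i j = k j i.
Definition dlt (i0 : I) : I -> R := fun i => (i == i0)%:R.

Lemma sum_dltl (i0 : I) (F : I -> R) : \sum_i dlt i0 i * F i = F i0.
Proof.
rewrite (bigD1 i0) //= /dlt eqxx mul1r big1 ?addr0 // => j /negbTE ->.
by rewrite mul0r.
Qed.

Lemma qf_bf k c : qf k c = bf k c c.
Proof. by []. Qed.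

Lemma bf_sym k c d : symk k -> bf k c d = bf k d c.
Proof.
move=> sk; rewrite /bf exchange_big /=; apply: eq_bigr => i _.
by apply: eq_bigr => j _; rewrite sk; ring.
Qed.

Lemma qf_lin k c d (x : R) : symk k ->
  qf k (fun i => c i + x * d i) = qf k c + 2 * x * bf k c d + x ^+ 2 * qf k d.
Proof.
move=> sk.
have -> : qf k (fun i => c i + x * d i) =
   \sum_i \sum_j (c i * c j * k i j + x * (c i * d j * k i j)
      + x * (d i * c j * k i j) + x ^+ 2 * (d i * d j * k i j)).
  by apply: eq_bigr => i _; apply: eq_bigr => j _; ring.
under eq_bigr do rewrite !big_split /= -!mulr_sumr.
rewrite !big_split /= -!mulr_sumr.
have -> : \sum_i \sum_j d i * c j * k i j = bf k c d by rewrite -bf_sym.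
rewrite /qf /bf; ring.
Qed.

Lemma qf_dlt k i0 : qf k (dlt i0) = k i0 i0.
Proof.
rewrite /qf (eq_bigr (fun i => dlt i0 i * \sum_j dlt i0 j * k i j)); last first.
  by move=> i _; rewrite mulr_sumr; apply: eq_bigr => j _; ring.
by rewrite !sum_dltl.
Qed.

Lemma bf_dlt k c j0 : bf k c (dlt j0) = \sum_i c i * k i j0.
Proof.
rewrite /bf; apply: eq_bigr => i _.
rewrite (eq_bigr (fun j => dlt j0 j * (c i * k i j))) ?sum_dltl //.
by move=> j _; ring.
Qed.

Lemma psd_diag k i : psd k -> 0 <= k i i.
Proof. by move=> pk; rewrite -qf_dlt. Qed.

Lemma psd_CS k c d : symk k -> psd k -> bf k c d ^+ 2 <= qf k c * qf k d.
Proof.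
move=> sk pk; set b := bf k c d; set qc := qf k c; set qd := qf k d.
have H x : 0 <= qc + 2 * x * b + x ^+ 2 * qd by rewrite -qf_lin //.
have qd0 : 0 <= qd by apply: pk.
have qc0 : 0 <= qc by apply: pk.
case: (ltP 0 qd) => [qdp|qdn].
  have := H (- b / qd).
  have -> : qc + 2 * (- b / qd) * b + (- b / qd) ^+ 2 * qd = qc - b ^+ 2 / qd.
    by field; rewrite gt_eqF.
  rewrite subr_ge0 ler_pdivrMr //.
have qdz : qd = 0 by apply/le_anti; rewrite qdn qd0.
case: (eqVneq b 0) => [->|bn0]; first by rewrite expr0n /= qdz mulr0.
have := H (- (qc + 1) / (2 * b)).
have -> : qc + 2 * (- (qc + 1) / (2 * b)) * b + (- (qc + 1) / (2 * b)) ^+ 2 * qd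
   = -1.
  by rewrite qdz; field.
by move=> h; lra.
Qed.

Lemma psd_off0 k i j : symk k -> psd k -> k i i = 0 -> k i j = 0.
Proof.
move=> sk pk kii.
have := psd_CS k (dlt j) (dlt i) sk pk.
rewrite bf_dlt sum_dltl !qf_dlt kii mulr0 => H.
have : k j i ^+ 2 == 0 by rewrite eq_le H sqr_ge0.
by rewrite sqrf_eq0 sk => /eqP.
Qed.


Lemma gram_ind (n : nat) : forall k, (#|[pred i | k i i != 0%R]| <= n)%N -> symk k -> psd k ->
  exists s : seq (I -> R), forall i j, k i j = \sum_(v <- s) v i * v j.
Proof.
elim: n => [|n IH] k hn sk pk.
  exists [::] => i j; rewrite big_nil; apply: psd_off0 => //.
  have /card0_eq h0 : #|[pred i | k i i != 0]| = 0%N by apply/eqP; rewrite -leqn0.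
  by have := h0 i; rewrite !inE /= => /negbFE/eqP.
case: (pickP [pred i | k i i != 0]) => [i0 /= hi0 | h0]; last first.
  exists [::] => i j; rewrite big_nil; apply: psd_off0 => //.
  by have := h0 i; rewrite /= => /negbFE/eqP.
set a := k i0 i0.
have a0 : 0 < a by rewrite lt_def hi0 psd_diag.
have sa0 : Num.sqrt a != 0 by rewrite sqrtr_eq0 -ltNge.
pose v := fun j => k j i0 / Num.sqrt a.
have vv : forall i j, v i * v j = k i i0 * k j i0 / a.
  by move=> i j; rewrite /v mulrACA -invfM -expr2 sqr_sqrtr ?(ltW a0).
pose k' := fun i j => k i j - v i * v j.
have sk' : symk k' by move=> i j; rewrite /k' sk mulrC.
have pk' : psd k'.
  move=> c.
  have -> : qf k' c = qf k c - (\sum_i c i * v i) ^+ 2.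
    rewrite /qf /k' expr2 mulr_suml -sumrB; apply: eq_bigr => i _.
    rewrite mulr_sumr -sumrB; apply: eq_bigr => j _; ring.
  have -> : \sum_i c i * v i = bf k c (dlt i0) / Num.sqrt a.
    by rewrite bf_dlt mulr_suml; apply: eq_bigr => i _; rewrite /v mulrA.
  rewrite subr_ge0 expr_div_n sqr_sqrtr ?(ltW a0) // ler_pdivrMr //.
  by have := psd_CS k c (dlt i0) sk pk; rewrite qf_dlt.
have card' : (#|[pred i | k' i i != 0%R]| <= n)%N.
  have sub : [pred i | k' i i != 0] \subset [predD1 [pred i | k i i != 0] & i0].
    apply/fintype.subsetP => i; rewrite !inE /=.
    case: (eqVneq i i0) => [->|ni] /=.
      by rewrite /k' vv -/a mulfK ?subrr ?eqxx.
    apply: contraNneq => kii.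
    by rewrite /k' vv (psd_off0 k i i0 sk pk kii) kii !mul0r subr0.
  have := subset_leq_card sub.
  have hc := cardD1 i0 [pred i | k i i != 0]; rewrite inE /= hi0 in hc.
  move=> h; rewrite hc add1n ltnS in hn; exact: leq_trans h hn.
have [s hs] := IH k' card' sk' pk'.
by exists (v :: s) => i j; rewrite big_cons -hs /k'; ring.
Qed.

Lemma gram k : symk k -> psd k ->
  exists s : seq (I -> R), forall i j, k i j = \sum_(v <- s) v i * v j.
Proof. by move=> sk pk; apply: (@gram_ind _ k (leqnn _) sk pk). Qed.

Lemma qf_gram k (s : seq (I -> R)) c :
  qf (fun i j => k i j * \sum_(v <- s) v i * v j) c =
  \sum_(v <- s) qf k (fun i => c i * v i).
Proof.
rewrite /qf.
transitivity (\sum_i \sum_j \sum_(v <- s) (c i * v i) * (c j * v j) * k i j).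
  apply: eq_bigr => i _; apply: eq_bigr => j _.
  rewrite !mulr_sumr; apply: eq_bigr => v _; ring.
under eq_bigr => i _ do rewrite exchange_big /=.
by rewrite exchange_big.
Qed.

Lemma psd_schur k l : symk l -> psd l -> psd k -> psd (fun i j => k i j * l i j).
Proof.
move=> sl pl pk c; have [s hs] := gram l sl pl.
have -> : (fun i j => k i j * l i j) =
    (fun i j => k i j * \sum_(v <- s) v i * v j).
  by apply/funext => i; apply/funext => j; rewrite hs.
by rewrite qf_gram; apply: sumr_ge0 => v _; exact: pk.
Qed.

Lemma psd_add k l : psd k -> psd l -> psd (fun i j => k i j + l i j).
Proof.
move=> pk pl c.
have -> : qf (fun i j => k i j + l i j) c = qf k c + qf l c.
  rewrite /qf -big_split; apply: eq_bigr => i _.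
  rewrite -big_split; apply: eq_bigr => j _ /=; ring.
by rewrite addr_ge0.
Qed.

Lemma psd_scale k (a : R) : 0 <= a -> psd k -> psd (fun i j => a * k i j).
Proof.
move=> a0 pk c.
have -> : qf (fun i j => a * k i j) c = a * qf k c.
  rewrite /qf mulr_sumr; apply: eq_bigr => i _.
  rewrite mulr_sumr; apply: eq_bigr => j _ /=; ring.
by rewrite mulr_ge0.
Qed.

Lemma qf_const (a : R) c : qf (fun _ _ => a) c = a * (\sum_i c i) ^+ 2.
Proof.
rewrite /qf expr2 mulr_suml mulr_sumr; apply: eq_bigr => i _.
rewrite mulr_sumr mulr_sumr; apply: eq_bigr => j _; ring.
Qed.

Lemma psd_const (a : R) : 0 <= a -> psd (fun _ _ => a).
Proof. by move=> a0 c; rewrite qf_const mulr_ge0 // sqr_ge0. Qed.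

Lemma qf_conj k (a : I -> R) c :
  qf (fun i j => a i * a j * k i j) c = qf k (fun i => c i * a i).
Proof. by rewrite /qf; apply: eq_bigr => i _; apply: eq_bigr => j _; ring. Qed.

Lemma psd_conj k (a : I -> R) : psd k -> psd (fun i j => a i * a j * k i j).
Proof. by move=> pk c; rewrite qf_conj. Qed.

Lemma psd_pow k p : symk k -> psd k -> psd (fun i j => k i j ^+ p).
Proof.
move=> sk pk; elim: p => [|p IH].
  have -> : (fun i j => k i j ^+ 0) = (fun _ _ => 1) by [].
  exact: psd_const.
have -> : (fun i j => k i j ^+ p.+1) = (fun i j => k i j ^+ p * k i j).
  by apply/funext => i; apply/funext => j; rewrite exprSr.
exact: psd_schur.
Qed.


Lemma cvg_sumf (J : Type) (r : seq J) (f : J -> nat -> R) (a : J -> R) :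
  (forall j, f j n @[n --> \oo] --> a j) ->
  \sum_(j <- r) f j n @[n --> \oo] --> \sum_(j <- r) a j.
Proof.
move=> h; elim: r => [|j r IH].
  rewrite big_nil; under eq_cvg do rewrite big_nil; exact: cvg_cst.
rewrite big_cons; under eq_cvg do rewrite big_cons; exact: cvgD.
Qed.

Definition sE k c n := \sum_(0 <= p < n) qf (fun i j => k i j ^+ p) c / p`!%:R.

Lemma sE_qf k c n : sE k c n = qf (fun i j => series (exp_coeff (k i j)) n) c.
Proof.
rewrite /sE /qf.
transitivity (\sum_(0 <= p < n) \sum_i \sum_j c i * c j * (k i j ^+ p / p`!%:R)).
  apply: eq_bigr => p _; rewrite mulr_suml; apply: eq_bigr => i _.
  by rewrite mulr_suml; apply: eq_bigr => j _; ring.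
rewrite exchange_big /=; apply: eq_bigr => i _.
rewrite exchange_big /=; apply: eq_bigr => j _.
by rewrite /series /= mulr_sumr.
Qed.

Lemma sE_cvg k c : sE k c n @[n --> \oo] --> qf (fun i j => expR (k i j)) c.
Proof.
under eq_cvg do rewrite sE_qf.
rewrite /qf; apply: cvg_sumf => i; apply: cvg_sumf => j.
apply: cvgM; first exact: cvg_cst.
exact: is_cvg_series_exp_coeff.
Qed.

Lemma sE_nondecr k c n m : symk k -> psd k -> (n <= m)%N -> sE k c n <= sE k c m.
Proof.
move=> sk pk nm; rewrite /sE [X in _ <= X](@big_cat_nat _ _ _ n) //= lerDl.
apply: sumr_ge0 => p _; apply: divr_ge0; last exact: ler0n.
exact: psd_pow.
Qed.

Lemma psd_exp k : symk k -> psd k -> psd (fun i j => expR (k i j)).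
Proof.
move=> sk pk c; apply: (cvgr_to_ge (sE_cvg k c)).
near=> n; rewrite (_ : 0 = sE k c 0); last by rewrite /sE big_geq.
exact: sE_nondecr.
Unshelve. all: by end_near.
Qed.

Lemma exp_qf0 k c : symk k -> psd k -> qf (fun i j => expR (k i j)) c = 0 ->
  forall p, qf (fun i j => k i j ^+ p) c = 0.
Proof.
move=> sk pk E0.
have le n : sE k c n <= 0.
  rewrite -E0; apply: (cvgr_to_ge (sE_cvg k c)).
  apply: filterS (nbhs_infty_ge n) => m nm; exact: sE_nondecr.
have ge n : 0 <= sE k c n.
  rewrite (_ : 0 = sE k c 0); last by rewrite /sE big_geq.
  exact: sE_nondecr.
move=> p; have := le p.+1; rewrite /sE big_nat_recr //= -/(sE k c p) => h.
have hp : qf (fun i j => k i j ^+ p) c / p`!%:R = 0.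
  have q0 := psd_pow k p sk pk c.
  apply/le_anti/andP; split; first by have := ge p; lra.
  by apply: divr_ge0 => //; exact: ler0n.
move/eqP: hp; rewrite mulf_eq0 invr_eq0 pnatr_eq0 (gtn_eqF (fact_gt0 p)) orbF.
by move/eqP.
Qed.

Lemma Q_succ k (s : seq (I -> R)) p g :
  (forall i j, k i j = \sum_(v <- s) v i * v j) ->
  qf (fun i j => k i j ^+ p.+1) g =
  \sum_(v <- s) qf (fun i j => k i j ^+ p) (fun i => g i * v i).
Proof.
move=> hs; rewrite -qf_gram; congr qf.
by apply/funext => i; apply/funext => j; rewrite exprSr -hs.
Qed.

Lemma claim k (s : seq (I -> R)) :
  (forall i j, k i j = \sum_(v <- s) v i * v j) -> symk k -> psd k ->
  forall (a : seq (I -> R)) g, all (mem s) a ->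
  qf (fun i j => k i j ^+ size a) g = 0 ->
  \sum_j g j * \prod_(v <- a) v j = 0.
Proof.
move=> hs sk pk; elim => [|v a IH] g /=.
  move=> _; rewrite (_ : (fun i j => k i j ^+ 0) = fun _ _ => 1) //.
  rewrite qf_const mul1r => /eqP; rewrite sqrf_eq0 => /eqP h.
  by under eq_bigr do rewrite big_nil mulr1.
move=> /andP [vs als]; rewrite (Q_succ _ _ _ _ hs) => /eqP.
rewrite psumr_eq0; last by move=> w _; exact: psd_pow.
move=> /allP /(_ v vs) /= /eqP h0.
have := IH _ als h0.
under eq_bigr do rewrite big_cons mulrA.
by [].
Qed.

Definition Hc (s : seq (I -> R)) c g := forall a : seq (I -> R), all (mem s) a ->
  \sum_j c j * g j * \prod_(v <- a) v j = 0.

Lemma Hc_mul s c g (l : I) : Hc s c g -> Hc s c (fun j => g j * \sum_(v <- s) (v j - v l) ^+ 2).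
Proof.
move=> h a als.
transitivity (\sum_(v <- s) \sum_j (c j * g j * \prod_(w <- v :: v :: a) w j
   - 2 * v l * (c j * g j * \prod_(w <- v :: a) w j)
   + v l ^+ 2 * (c j * g j * \prod_(w <- a) w j))).
  rewrite exchange_big /=; apply: eq_bigr => j _.
  rewrite mulr_sumr mulr_sumr mulr_suml; apply: eq_bigr => v _.
  rewrite !big_cons; ring.
apply: big1_seq => v /andP [_ vs].
rewrite big_split sumrB /= -!mulr_sumr.
rewrite (h (v :: v :: a)) /= ?vs ?als // (h (v :: a)) /= ?vs ?als // h //.
by rewrite !mulr0 subrr addr0.
Qed.

Lemma Hc_ext s c g g' : (forall j, g j = g' j) -> Hc s c g -> Hc s c g'.
Proof.
move=> e h a als; rewrite -[RHS](h a als); apply: eq_bigr => j _; by rewrite e.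
Qed.

Lemma Hc_prod s c (L : seq I) : Hc s c (fun _ => 1) ->
  Hc s c (fun j => \prod_(l <- L) \sum_(v <- s) (v j - v l) ^+ 2).
Proof.
move=> h1; elim: L => [|l L IH].
  by apply: (Hc_ext s c (fun _ => 1) _ _ h1) => j; rewrite big_nil.
apply: (Hc_ext _ _ _ _ _ (Hc_mul _ _ _ l IH)) => j; by rewrite big_cons mulrC.
Qed.

Lemma nrm_eq k (s : seq (I -> R)) (i l : I) :
  (forall i j, k i j = \sum_(v <- s) v i * v j) ->
  \sum_(v <- s) (v i - v l) ^+ 2 = k i i + k l l - 2 * k i l.
Proof.
move=> hs; rewrite !hs mulr_sumr -big_split -sumrB; apply: eq_bigr => v _ /=; ring.
Qed.

Lemma exp_strict k c : symk k -> psd k ->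
  (forall i j, i != j -> 2 * k i j < k i i + k j j) ->
  qf (fun i j => expR (k i j)) c = 0 -> forall i, c i = 0.
Proof.
move=> sk pk hd E0 i0; have [s hs] := gram k sk pk.
have Q0 := exp_qf0 _ _ sk pk E0.
have h1 : Hc s c (fun _ => 1).
  move=> a als; rewrite -[RHS](claim _ _ hs sk pk _ _ als (Q0 (size a))).
  by apply: eq_bigr => j _; rewrite mulr1.
pose L := [seq l <- enum I | l != i0].
have := Hc_prod _ _ L h1 [::] isT.
rewrite [X in X = 0 -> _](bigD1 i0) //= [X in _ + X = 0 -> _]big1 ?addr0; last first.
  move=> j nj; apply/eqP; rewrite !mulf_eq0; apply/orP; left; apply/orP; right.
  rewrite prodf_seq_eq0; apply/hasP; exists j; first by rewrite mem_filter nj mem_enum.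
  by rewrite /= big1 ?eqxx // => v _; rewrite subrr expr0n.
rewrite big_nil mulr1 => /eqP; rewrite mulf_eq0 => /orP [/eqP // | ].
rewrite prodf_seq_eq0 => /hasP [l]; rewrite mem_filter => /andP [nl _] /= /eqP.
rewrite (nrm_eq _ _ _ _ hs) => h; have := hd i0 l; rewrite eq_sym nl => /(_ isT).
lra.
Qed.


Definition cnd k := forall c, \sum_i c i = 0 -> qf k c <= 0.

Lemma qf_kadd k l c : qf (fun i j => k i j + l i j) c = qf k c + qf l c.
Proof.
rewrite /qf -big_split; apply: eq_bigr => i _.
rewrite -big_split; apply: eq_bigr => j _ /=; ring.
Qed.

Lemma qf_kscale k (a : R) c : qf (fun i j => a * k i j) c = a * qf k c.
Proof.
rewrite /qf mulr_sumr; apply: eq_bigr => i _.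
rewrite mulr_sumr; apply: eq_bigr => j _ /=; ring.
Qed.

Lemma qf_ksum (J : finType) (K : J -> I -> I -> R) c :
  qf (fun i j => \sum_q K q i j) c = \sum_q qf (K q) c.
Proof.
rewrite /qf; under eq_bigr do under eq_bigr do rewrite mulr_sumr.
under eq_bigr do rewrite exchange_big /=.
by rewrite exchange_big.
Qed.

Lemma qf_rank1 (a : I -> R) c : qf (fun i j => a i * a j) c = (\sum_i c i * a i) ^+ 2.
Proof.
rewrite /qf expr2 mulr_suml; apply: eq_bigr => i _.
rewrite mulr_sumr; apply: eq_bigr => j _; ring.
Qed.

Lemma qf_sum1 (u : I -> R) c :
  qf (fun i j => u i + u j) c = 2 * (\sum_i c i) * (\sum_i c i * u i).
Proof.
rewrite qf_kadd.
have -> : qf (fun i j => u i) c = (\sum_i c i) * (\sum_i c i * u i).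
  rewrite /qf mulrC mulr_suml; apply: eq_bigr => i _.
  rewrite mulr_sumr; apply: eq_bigr => j _; ring.
have -> : qf (fun i j => u j) c = (\sum_i c i) * (\sum_i c i * u i).
  rewrite /qf mulr_suml; apply: eq_bigr => i _.
  rewrite mulr_sumr; apply: eq_bigr => j _; ring.
ring.
Qed.

Lemma qf_ext k l c : (forall i j, k i j = l i j) -> qf k c = qf l c.
Proof. by move=> e; apply: eq_bigr => i _; apply: eq_bigr => j _; rewrite e. Qed.

Section Schoen.
Variables (phi : I -> I -> R) (i0 : I).
Hypotheses (sphi : symk phi) (dphi : forall i, phi i i = 0) (cphi : cnd phi).

Definition Ak i j := phi i i0 + phi i0 j - phi i j.

Lemma symA : symk Ak.
Proof. by move=> i j; rewrite /Ak (sphi i0 i) (sphi i0 j) (sphi i j); ring. Qed.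

Lemma psdA : psd Ak.
Proof.
move=> c; set S := \sum_i c i.
pose d := fun i => c i + (- S) * dlt i0 i.
have Sd : \sum_i d i = 0.
  rewrite /d big_split /= -mulr_sumr.
  rewrite (_ : \sum_i dlt i0 i = 1) ?mulr1 ?subrr //.
  by rewrite -(sum_dltl i0 (fun _ => 1)); apply: eq_bigr => i _; rewrite mulr1.
have := cphi d Sd; rewrite /d qf_lin // qf_dlt dphi mulr0 addr0 bf_dlt.
have -> : qf Ak c = qf (fun i j => phi i i0 + phi j i0) c + (-1) * qf phi c.
  rewrite -qf_kscale -qf_kadd; apply: qf_ext => i j; rewrite /Ak (sphi i0 j); ring.
rewrite qf_sum1 -/S.
lra.
Qed.

Lemma exp_phiE i j :
  expR (- phi i j) = expR (- phi i i0) * expR (- phi j i0) * expR (Ak i j).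
Proof. by rewrite -!expRD /Ak (sphi i0 j); congr expR; ring. Qed.

Lemma schoen_psd : psd (fun i j => expR (- phi i j)).
Proof.
move=> c; rewrite (qf_ext _ _ _ exp_phiE) qf_conj.
exact: psd_exp symA psdA _.
Qed.

Lemma schoen_strict c : (forall i j, i != j -> 0 < phi i j) ->
  qf (fun i j => expR (- phi i j)) c = 0 -> c i0 = 0.
Proof.
move=> hp; rewrite (qf_ext _ _ _ exp_phiE) qf_conj => h0.
have := exp_strict _ _ symA psdA _ h0 i0.
move=> H; have e : expR (- phi i0 i0) = 1 by rewrite dphi oppr0 expR0.
rewrite -[c i0]mulr1 -e; apply: H.
move=> i j nij; rewrite /Ak !dphi (sphi i0 i) (sphi i0 j).
have := hp i j nij; lra.
Qed.

End Schoen.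

Lemma schoen_psd' phi : symk phi -> (forall i, phi i i = 0) -> cnd phi ->
  psd (fun i j => expR (- phi i j)).
Proof.
move=> s d cn c; case: (pickP (fun _ : I => true)) => [i0 _ | h0].
  exact: schoen_psd.
by rewrite /qf big1 // => i _; have := h0 i.
Qed.


Section Points.
Variables (J : finType) (x : I -> J -> R).

Definition psi i j := \sum_q (x i q - x j q) ^+ 2.

Lemma psi_sym : symk psi.
Proof. by move=> i j; apply: eq_bigr => q _; ring. Qed.

Lemma psi_diag i : psi i i = 0.
Proof. by rewrite /psi big1 // => q _; rewrite subrr expr0n. Qed.

Lemma psi_ge0 i j : 0 <= psi i j.
Proof. by apply: sumr_ge0 => q _; apply: sqr_ge0. Qed.

Lemma cnd_psi : cnd psi.
Proof.
move=> c S0; rewrite /psi qf_ksum; apply: sumr_le0 => q _.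
have -> : qf (fun i j => (x i q - x j q) ^+ 2) c =
   qf (fun i j => x i q ^+ 2 + x j q ^+ 2) c + (-2) * qf (fun i j => x i q * x j q) c.
  by rewrite -qf_kscale -qf_kadd; apply: qf_ext => i j; ring.
rewrite qf_sum1 qf_rank1 S0.
have := sqr_ge0 (\sum_i c i * x i q); lra.
Qed.

Lemma psd_gauss e : 0 <= e -> psd (fun i j => expR (- (e * psi i j))).
Proof.
move=> e0; apply: (schoen_psd' (fun i j => e * psi i j)).
- by move=> i j; rewrite psi_sym.
- by move=> i; rewrite psi_diag mulr0.
- move=> c S0; rewrite qf_kscale; apply: mulr_ge0_le0 => //; exact: cnd_psi.
Qed.

End Points.
Arguments psi {J} x i j.
Arguments psi_sym {J} x i j.
Arguments psi_diag {J} x i.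
Arguments psi_ge0 {J} x i j.
Arguments cnd_psi {J} x.
Arguments psd_gauss {J} x e.

Fixpoint rr (N : nat) (z : R) : R := if N is N'.+1 then (z + rr N' z ^+ 2) / 2 else 0.

Lemma rr_bound z N : 0 <= z <= 1 ->
  0 <= rr N z <= 1 - Num.sqrt (1 - z) /\
  (1 - Num.sqrt (1 - z)) - rr N z <= (1 - Num.sqrt (1 - z)) ^+ N.+1.
Proof.
move=> /andP [z0 z1].
have s0 : 0 <= Num.sqrt (1 - z) by apply: sqrtr_ge0.
have s2 : Num.sqrt (1 - z) ^+ 2 = 1 - z by rewrite sqr_sqrtr // subr_ge0.
have s1 : Num.sqrt (1 - z) <= 1.
  by rewrite -[X in _ <= X]sqrtr1; apply: ler_wsqrtr; lra.
set r := 1 - Num.sqrt (1 - z).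
have r0 : 0 <= r by rewrite /r subr_ge0.
have r1 : r <= 1 by rewrite /r; lra.
have rfix : r = (z + r ^+ 2) / 2.
  rewrite /r; move: s2; set s := Num.sqrt (1 - z) => s2.
  have e : (1 - s) ^+ 2 = 1 - 2 * s + s ^+ 2 by ring.
  by rewrite e s2; field.
elim: N => [|N [/andP [q0 qr] hq]] /=.
  by rewrite lexx r0 subr0 expr1.
set q := rr N z.
have q'0 : 0 <= (z + q ^+ 2) / 2 by apply: divr_ge0 => //; apply: addr_ge0 => //; exact: sqr_ge0.
have qq : q ^+ 2 <= r ^+ 2 by rewrite !expr2; apply: ler_pM.
rewrite q'0 /=; split.
  by rewrite [X in _ <= X]rfix ler_pM2r // lerD2l.
have -> : r - (z + q ^+ 2) / 2 = (r - q) * (r + q) / 2.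
  by rewrite [X in X - _]rfix; field.
rewrite exprSr.
have h1 : 0 <= (r - q) by rewrite subr_ge0.
have h2 : (r - q) * (r + q) / 2 <= (r - q) * r.
  rewrite ler_pdivrMr // -mulrA ler_wpM2l //; lra.
apply: (le_trans h2); apply: ler_wpM2r => //.
Qed.

Lemma rr_sym (Z : I -> I -> R) N : symk Z -> symk (fun i j => rr N (Z i j)).
Proof. by move=> sZ i j; rewrite sZ. Qed.

Lemma rr_psd (Z : I -> I -> R) N : symk Z -> psd Z -> psd (fun i j => rr N (Z i j)).
Proof.
move=> sZ pZ; elim: N => [|N IH].
  have -> : (fun i j => rr 0 (Z i j)) = (fun _ _ => 0) by [].
  by apply: psd_const.
have -> : (fun i j => rr N.+1 (Z i j)) =
    (fun i j => 2^-1 * (Z i j + rr N (Z i j) * rr N (Z i j))).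
  by apply/funext => i; apply/funext => j; rewrite /= expr2 mulrC.
apply: psd_scale; first by rewrite invr_ge0.
apply: psd_add => //; exact: (psd_schur _ _ (rr_sym _ N sZ) IH IH).
Qed.


Lemma geo (Z : I -> I -> R) c : symk Z -> psd Z -> (forall i, Z i i = 1) ->
  (forall i j, 0 <= Z i j <= 1) -> (forall i j, i != j -> Z i j < 1) ->
  \sum_i c i = 0 -> qf (fun i j => Num.sqrt (1 - Z i j)) c <= 0.
Proof.
move=> sZ pZ dZ bZ ltZ S0.
pose r := fun i j => 1 - Num.sqrt (1 - Z i j).
have e1 : qf (fun i j => Num.sqrt (1 - Z i j)) c = - qf r c.
  rewrite (qf_ext _ (fun i j => 1 + (-1) * r i j)); last by move=> i j; rewrite /r; ring.
  by rewrite qf_kadd qf_kscale qf_const S0 expr0n /= mulr0 add0r mulN1r.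
pose u N := \sum_i \sum_j (if i == j then 0 else `|c i * c j| * r i j ^+ N.+1).
have bound N : - qf r c <= u N.
  have -> : qf r c = qf (fun i j => rr N (Z i j)) c +
                     qf (fun i j => r i j - rr N (Z i j)) c.
    by rewrite -qf_kadd; apply: qf_ext => i j; ring.
  have := rr_psd _ N sZ pZ c => h.
  suff : - qf (fun i j => r i j - rr N (Z i j)) c <= u N by lra.
  rewrite /qf -sumrN; apply: ler_sum => i _; rewrite -sumrN; apply: ler_sum => j _.
  case: eqP => [<-|/eqP nij].
    have [/andP [q0 qr] _] := rr_bound _ N (bZ i i).
    rewrite oppr_le0; apply: mulr_ge0; first by have := sqr_ge0 (c i); rewrite expr2.
    rewrite /r; lra.
  have [/andP [q0 qr] hq] := rr_bound _ N (bZ i j).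
  apply: (le_trans (ler_norm _)); rewrite normrN normrM (ger0_norm (x := _ - _)); last first.
    rewrite /r; lra.
  by apply: ler_wpM2l => //; exact: normr_ge0.
have cvgu : u N @[N --> \oo] -->
    \sum_i \sum_j (if i == j then 0 else `|c i * c j| * (r i j * 0)).
  apply: cvg_sumf => i; apply: cvg_sumf => j; case: eqP => [_|/eqP nij]; first exact: cvg_cst.
  apply: cvgM; first exact: cvg_cst.
  under eq_cvg do rewrite exprS.
  apply: cvgM; first exact: cvg_cst.
  apply: cvg_expr.
  have [/andP [q0 qr] _] := rr_bound _ 0 (bZ i j).
  rewrite ger0_norm; last by rewrite /r /=; lra.
  rewrite /r /= ltrBlDr ltrDl sqrtr_gt0 subr_gt0; exact: ltZ.
rewrite e1; have := cvgr_to_ge cvgu.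
rewrite big1 => [H|i _]; last by rewrite big1 // => j _; case: ifP; rewrite ?mulr0.
apply: H; near=> N; exact: bound.
Unshelve. all: by end_near.
Qed.

Lemma pw (ps d : R) : 0 <= ps -> 0 < d ->
  0 <= d * Num.sqrt ps - Num.sqrt (1 - expR (- (d ^+ 2 * ps))) <= d ^+ 2 * ps.
Proof.
move=> p0 d0; set x := d ^+ 2 * ps.
have x0 : 0 <= x by rewrite /x mulr_ge0 // sqr_ge0.
set t := expR (- x).
have t0 : 0 < t by apply: expR_gt0.
have t1 : t <= 1 by rewrite /t expR_le1 oppr_le0.
have tl : 1 - x <= t by have := expR_ge1Dx (- x); rewrite /t; lra.
have tu : t * (1 + x) <= 1.
  have : t * expR x = 1 by rewrite /t -expRD addNr expR0.
  move=> e; rewrite -[X in _ <= X]e; apply: ler_wpM2l; [exact: ltW | exact: expR_ge1Dx].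
set y := 1 - t.
have y0 : 0 <= y by rewrite /y subr_ge0.
set A := d * Num.sqrt ps; set B := Num.sqrt y.
have A0 : 0 <= A by rewrite /A mulr_ge0 ?sqrtr_ge0 // ltW.
have B0 : 0 <= B by apply: sqrtr_ge0.
have A2 : A ^+ 2 = x by rewrite /A exprMn sqr_sqrtr.
have B2 : B ^+ 2 = y by rewrite /B sqr_sqrtr.
have yx : y <= x by rewrite /y; lra.
have xy : x - y <= x ^+ 2.
  have h1 : 0 <= (1 - t * (1 + x)) * (1 - x + x ^+ 2).
    apply: mulr_ge0; first lra.
    have := sqr_ge0 (x - 1/2); nra.
  have h2 : 0 <= t * x ^+ 3 by apply: mulr_ge0; [exact: ltW | exact: exprn_ge0].
  rewrite /y; nra.
have BA : B <= A by nra.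
apply/andP; split; first lra.
nra.
Qed.


Lemma cnd_sqrt (J : finType) (x : I -> J -> R) :
  (forall i j, i != j -> 0 < psi x i j) -> cnd (fun i j => Num.sqrt (psi x i j)).
Proof.
move=> hp c S0.
set Q := qf (fun i j => Num.sqrt (psi x i j)) c.
set C := \sum_i \sum_j `|c i * c j| * psi x i j.
have C0 : 0 <= C.
  apply: sumr_ge0 => i _; apply: sumr_ge0 => j _.
  by apply: mulr_ge0; [exact: normr_ge0 | exact: psi_ge0].
have H : forall d : R, 0 < d -> Q <= d * C.
  move=> d d0.
  pose Z := fun i j => expR (- (d ^+ 2 * psi x i j)).
  have G : qf (fun i j => Num.sqrt (1 - Z i j)) c <= 0.
    apply: geo => //.
    - by move=> i j; rewrite /Z psi_sym.
    - exact: (psd_gauss x _ (sqr_ge0 d)).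
    - by move=> i; rewrite /Z psi_diag mulr0 oppr0 expR0.
    - move=> i j; rewrite /Z (ltW (expR_gt0 _)) /= expR_le1 oppr_le0.
      by apply: mulr_ge0; [exact: sqr_ge0 | exact: psi_ge0].
    - move=> i j nij; rewrite /Z expR_lt1 oppr_lt0.
      by apply: mulr_gt0; [exact: exprn_gt0 | exact: hp].
  have E : d * Q = qf (fun i j => Num.sqrt (1 - Z i j)) c +
      qf (fun i j => d * Num.sqrt (psi x i j) - Num.sqrt (1 - Z i j)) c.
    by rewrite /Q -qf_kadd -qf_kscale; apply: qf_ext => i j; ring.
  have D : qf (fun i j => d * Num.sqrt (psi x i j) - Num.sqrt (1 - Z i j)) c
      <= d ^+ 2 * C.
    rewrite /qf /C mulr_sumr; apply: ler_sum => i _.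
    rewrite mulr_sumr; apply: ler_sum => j _.
    have /andP [h0 h1] := pw _ _ (psi_ge0 x i j) d0.
    apply: (le_trans (ler_norm _)); rewrite normrM (ger0_norm h0) mulrCA.
    by apply: ler_wpM2l => //; exact: normr_ge0.
  have : d * Q <= d * (d * C) by rewrite E mulrA -expr2; lra.
  by rewrite ler_pM2l.
case: (lerP Q 0) => // Qp.
have := H (Q / (C + 1)) (divr_gt0 Qp (ltr_pwDr ltr01 C0)).
rewrite mulrAC ler_pdivlMr; last by lra.
rewrite mulrDr mulr1 => h; lra.
Qed.

Lemma strictPD (J : finType) (x : I -> J -> R) (t : R) c : 0 < t ->
  (forall i j, i != j -> 0 < psi x i j) ->
  qf (fun i j => expR (- (t * Num.sqrt (psi x i j)))) c = 0 -> forall i, c i = 0.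
Proof.
move=> t0 hp h i0.
apply: (schoen_strict (fun i j => t * Num.sqrt (psi x i j)) i0) h.
- by move=> i j; rewrite psi_sym.
- by move=> i; rewrite psi_diag sqrtr0 mulr0.
- by move=> c' S0; rewrite qf_kscale; apply: mulr_ge0_le0; [exact: ltW | exact: cnd_sqrt].
- by move=> i j nij; apply: mulr_gt0 => //; rewrite sqrtr_gt0; exact: hp.
Qed.

End Kern.

Arguments qf {R I}.
Arguments bf {R I}.
Arguments psi {R I J}.
Arguments strictPD {R I J}.
Arguments qf_lin {R I}.
Arguments symk {R I}.
Arguments psd {R I}.
Arguments psi_sym {R I J}.

Section Final.
Variables (R : realType) (D : nat).
Local Open Scope fset_scope.

Definition xs (A : {fset pt R D}) (i : 'I_#|{: A}|) (q : 'I_D) : R :=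
  (val (enum_val i) : pt R D) 0 q.

Lemma zetaE (t : R) (A : {fset pt R D}) i j :
  zeta t A i j = expR (- (t * Num.sqrt (psi (xs A) i j))).
Proof.
rewrite /zeta mxE /edist /enorm; congr (expR (- (t * Num.sqrt _))).
by apply: eq_bigr => q _; rewrite !mxE.
Qed.

Lemma psi_pos (A : {fset pt R D}) i j : i != j -> 0 < psi (xs A) i j.
Proof.
move=> nij; rewrite lt_def psi_ge0 andbT; apply/negP => /eqP h.
move/negP: nij; apply; apply/eqP; apply: enum_val_inj; apply: val_inj.
apply/rowP => q; apply/eqP; rewrite -subr_eq0 -sqrf_eq0.
apply/eqP; apply: (psumr_eq0P _ h) => // r _; exact: sqr_ge0.
Qed.

Lemma zeta_strict (t : R) (A : {fset pt R D}) c : 0 < t ->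
  qf (fun i j => zeta t A i j) c = 0 -> forall i, c i = 0.
Proof.
move=> t0 h; apply: (strictPD (xs A) t c t0 (@psi_pos A)).
by rewrite -h; apply: qf_ext => i j; rewrite zetaE.
Qed.

Lemma zeta_unit (t : R) (A : {fset pt R D}) : 0 < t -> zeta t A \in unitmx.
Proof.
move=> t0; rewrite -row_free_unit -kermx_eq0; apply/negPn/negP => /rowV0Pn [v].
rewrite sub_kermx => /eqP vK; apply/negP; rewrite negbK.
apply/eqP/rowP => i; rewrite mxE.
apply: (zeta_strict _ _ (fun i => v 0 i) t0).
rewrite /qf exchange_big /=.
rewrite (eq_bigr (fun j => v 0 j * (v *m zeta t A) 0 j)); last first.
  move=> j _; rewrite mxE mulr_sumr; apply: eq_bigr => k _; ring.
by rewrite vK big1 // => j _; rewrite mxE mulr0.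
Qed.

Lemma weighting_eq (t : R) (A : {fset pt R D}) k : 0 < t ->
  \sum_l zeta t A k l * weighting t A l 0 = 1.
Proof.
move=> t0; have := mulKVmx (zeta_unit t A t0) (const_mx 1 : 'cV[R]_(#|{: A}|)).
move=> /matrixP /(_ k 0); rewrite [LHS]mxE [RHS]mxE => <-.
by [].
Qed.

Lemma weightE (t : R) (A : {fset pt R D}) x (xA : x \in A) :
  weight t A x = weighting t A (enum_rank [` xA]) 0.
Proof. by rewrite /weight insubT. Qed.


Lemma zeta_sym (t : R) (A : {fset pt R D}) : symk (fun i j => zeta t A i j).
Proof. by move=> i j; rewrite !zetaE psi_sym. Qed.

Lemma main_lemma (t : R) (X Z : {fset pt R D}) : 0 < t -> X `<=` Z ->
  (Mag t Z = Mag t X <-> mag_equiv t X Z).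
Proof.
move=> t0 XZ.
pose sig := fun i : 'I_#|{: X}| => enum_rank (fincl XZ (enum_val i)) : 'I_#|{: Z}|.
have sigv i : val (enum_val (sig i)) = val (enum_val i) by rewrite /sig enum_rankK.
have sig_inj : injective sig.
  move=> i j /(congr1 (fun k => val (enum_val k))); rewrite !sigv.
  by move=> /val_inj /enum_val_inj.
have ZXE i j : zeta t X i j = zeta t Z (sig i) (sig j) by rewrite /zeta !mxE !sigv.
pose ext (G : 'I_#|{: X}| -> R) k := \sum_(i | sig i == k) G i.
have R1 G (H : 'I_#|{: Z}| -> R) : \sum_k ext G k * H k = \sum_i G i * H (sig i).
  rewrite /ext; under eq_bigr do rewrite mulr_suml big_mkcond.
  rewrite exchange_big /=; apply: eq_bigr => i _.
  rewrite (bigD1 (sig i)) //= eqxx big1 ?addr0 // => k /negbTE nk.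
  by rewrite eq_sym nk.
have R2 G i : ext G (sig i) = G i.
  by rewrite /ext (big_pred1 i) // => j /=; rewrite (inj_eq sig_inj).
have R3 G k : (forall i, sig i != k) -> ext G k = 0.
  by move=> h; rewrite /ext big_pred0 // => i; apply/negbTE.
have R4 (F H : 'I_#|{: Z}| -> R) : (forall k, (forall i, sig i != k) -> F k = 0) ->
    \sum_k F k * H k = \sum_i F (sig i) * H (sig i).
  move=> hF; rewrite -(R1 (fun i => F (sig i)) H); apply: eq_bigr => k _; congr (_ * _).
  case: (pickP (fun i => sig i == k)) => [i /eqP <- | h0]; first by rewrite R2.
  by rewrite R3 ?hF // => i; rewrite h0.
have eqZ k : \sum_l zeta t Z k l * weighting t Z l 0 = 1 by apply: weighting_eq.
have eqX k : \sum_l zeta t X k l * weighting t X l 0 = 1 by apply: weighting_eq.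
split => [hM | hE].
  pose v k := ext (fun i => weighting t X i 0) k.
  pose dd k := (v k + (-1) * weighting t Z k 0)%R.
  have Qe : qf (fun i j => zeta t Z i j) dd = 0.
    rewrite /dd qf_lin; last exact: zeta_sym.
    have bvw : bf (fun i j => zeta t Z i j) v (fun k => weighting t Z k 0) = Mag t X.
      rewrite /bf; transitivity (\sum_k v k * 1).
        apply: eq_bigr => k _; rewrite -(eqZ k) mulr_sumr.
        by apply: eq_bigr => l _; ring.
      by rewrite R1 /Mag; apply: eq_bigr => i _; rewrite !mulr1.
    have qw : qf (fun i j => zeta t Z i j) (fun k => weighting t Z k 0) = Mag t Z.
      rewrite /qf /Mag; apply: eq_bigr => k _; rewrite -[RHS]mulr1 -(eqZ k) mulr_sumr.
      by apply: eq_bigr => l _; ring.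
    have qv : qf (fun i j => zeta t Z i j) v = Mag t X.
      rewrite /qf; transitivity (\sum_k v k *
          \sum_j weighting t X j 0 * zeta t Z k (sig j)).
        apply: eq_bigr => k _.
        rewrite (eq_bigr (fun l => v k * (v l * zeta t Z k l))); last by move=> l _; ring.
        by rewrite -mulr_sumr R1.
      rewrite R1 /Mag; apply: eq_bigr => i _.
      rewrite -[RHS]mulr1 -(eqX i); congr (_ * _).
      by apply: eq_bigr => j _; rewrite ZXE mulrC.
    rewrite qv qw bvw hM; ring.
  have d0 := zeta_strict t Z dd t0 Qe.
  have vw k : v k = weighting t Z k 0 by have := d0 k; rewrite /dd; lra.
  rewrite /mag_equiv /wsupport; apply/fsetP => x; rewrite !inE /=.
  case xX: (x \in X) => /=.
    have xZ := fsubsetP XZ x xX; rewrite xZ /= (weightE t X _ xX) (weightE t Z _ xZ).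
    have -> : enum_rank [` xZ] = sig (enum_rank [` xX]).
      by rewrite /sig enum_rankK; congr enum_rank; apply: val_inj.
    by rewrite -vw /v R2.
  case xZ: (x \in Z) => //=.
  rewrite (weightE t Z _ xZ) -vw /v R3 ?eqxx // => i; apply/eqP => h.
  have : val (enum_val (sig i)) = x by rewrite h enum_rankK.
  rewrite sigv => e; move: (valP (enum_val i)); rewrite e xX.
  by [].
have wz0 k : (forall i, sig i != k) -> weighting t Z k 0 = 0.
  move=> hk; set a := enum_val k.
  have xnX : val a \notin X.
    apply/negP => xX; apply: (negP (hk (enum_rank [` xX]))); apply/eqP.
    rewrite /sig enum_rankK -[k]enum_valK; congr enum_rank; exact: val_inj.
  have : val a \notin wsupport t Z.
    by rewrite -hE /wsupport !inE /= (negbTE xnX).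
  rewrite /wsupport !inE /= (valP a) /= negbK (weightE t Z _ (valP a)) => /eqP.
  have -> : [` valP a] = a by apply: val_inj.
  by rewrite /a enum_valK.
pose U := \col_i weighting t Z (sig i) 0.
have HU : zeta t X *m U = const_mx 1.
  apply/matrixP => i j; rewrite !mxE.
  transitivity (\sum_l weighting t Z (sig l) 0 * zeta t Z (sig i) (sig l)).
    by apply: eq_bigr => l _; rewrite ZXE mulrC; congr (_ * _); rewrite /U mxE.
  rewrite -(R4 (fun k => weighting t Z k 0)) //.
  by rewrite -(eqZ (sig i)); apply: eq_bigr => l _; rewrite mulrC.
have wXU : weighting t X = U by rewrite /weighting -HU mulKmx // zeta_unit.
rewrite /Mag wXU.
transitivity (\sum_i weighting t Z (sig i) 0 * 1).
  by rewrite -(R4 (fun k => weighting t Z k 0) (fun _ => 1)) //; apply: eq_bigr => k _; rewrite mulr1.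
by apply: eq_bigr => i _; rewrite mulr1 /U [RHS]mxE.
Qed.

End Final.

Local Close Scope classical_set_scope.
Local Open Scope fset_scope.

Theorem lemmaB4 (R : realType) (D : nat) (t : R) (X Z : {fset pt R D}) :
  0 < t -> X `<=` Z ->
  (Mag t Z = Mag t X <-> mag_equiv t X Z).
Proof. exact: main_lemma. Qed.
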